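(* Let $G$ be a pro-oligomorphic group. The following are equivalent: (a) $G$ is split; (b) for every pro-oligomorphic group $H$, every open subgroup of $G\times H$ has the form $U\times V$ with $U$ open in $G$ and $V$ open in $H$; (c) every open subgroup of $G$ is its own normalizer; (d) the automorphism group of every transitive $G$-set is trivial; (e) whenever $V\subset U$ are open subgroups with $V$ of finite index in $U$, we have $U=V$. Moreover, if $G$ is split then every open subgroup of $G$ is split.
   Context: A pro-oligomorphic group is a Hausdorff topological group in which open subgroups form a neighborhood basis of the identity and $U\backslash G/V$ is finite for all open subgroups $U,V$. A $G$-set means a set with an action of $G$ having open stabilizers and finitely many orbits. $G$ is split if for every pro-oligomorphic group $H$, every transitive $(G\times H)$-set is isomorphic to $X\times Y$ for some transitive $G$-set $X$ and transitive $H$-set $Y$. *)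

(* Defs.v *)
From HB Require Import structures.
From mathcomp Require Import all_boot all_order all_algebra.
From mathcomp Require Import all_classical all_reals all_analysis.

Set Implicit Arguments. Unset Strict Implicit. Unset Printing Implicit Defensive.
Local Open Scope classical_set_scope.

Record tgroup := TGroup {
  tg_car :> topologicalType;
  tg_mul : tg_car -> tg_car -> tg_car;
  tg_inv : tg_car -> tg_car;
  tg_one : tg_car }.

Section Defs.
Variable G : tgroup.
Local Notation mul := (@tg_mul G).
Local Notation inv := (@tg_inv G).
Local Notation one := (tg_one G).

Definition is_topgroup : Prop :=
  [/\ (forall x y z : G, mul x (mul y z) = mul (mul x y) z),
      (forall x : G, mul one x = x),
      (forall x : G, mul (inv x) x = one),
      continuous (fun p : G * G => mul p.1 p.2) &
      continuous inv].

Definition is_subgroup (U : set G) : Prop :=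
  [/\ U one,
      (forall x y, U x -> U y -> U (mul x y)) &
      (forall x, U x -> U (inv x))].

Definition open_subgroup (U : set G) : Prop := is_subgroup U /\ open U.

Definition dcoset (U : set G) (g : G) (V : set G) : set G :=
  [set z | exists u v, [/\ U u, V v & z = mul (mul u g) v]].

Definition lcoset (u : G) (V : set G) : set G := (mul u) @` V.

Definition pro_oligomorphic : Prop :=
  [/\ is_topgroup,
      hausdorff_space G,
      (forall N : set G, nbhs one N -> exists U, open_subgroup U /\ U `<=` N) &
      (forall U V : set G, open_subgroup U -> open_subgroup V ->
         finite_set (range (fun g => dcoset U g V)))].

Definition stabilizer (X : Type) (act : G -> X -> X) (x : X) : set G :=
  [set g | act g x = x].

Definition orbit (X : Type) (act : G -> X -> X) (x : X) : set X :=
  [set act g x | g in setT].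

Definition is_Gset (X : Type) (act : G -> X -> X) : Prop :=
  [/\ (forall x, act one x = x),
      (forall g h x, act (mul g h) x = act g (act h x)),
      (forall x, open (stabilizer act x)) &
      finite_set (range (orbit act))].

Definition transitive_Gset (X : Type) (act : G -> X -> X) : Prop :=
  [/\ is_Gset act, (exists x : X, True) & (forall x y : X, exists g, act g x = y)].

Definition equivariant (X Y : Type) (actX : G -> X -> X) (actY : G -> Y -> Y)
  (f : X -> Y) : Prop := forall g x, f (actX g x) = actY g (f x).

Definition Gset_iso (X Y : Type) (actX : G -> X -> X) (actY : G -> Y -> Y) : Prop :=
  exists f : X -> Y, bijective f /\ equivariant actX actY f.

Definition normalizer (U : set G) : set G :=
  [set g | [set mul (mul g u) (inv g) | u in U] = U].

End Defs.

Definition prod_tgroup (G H : tgroup) : tgroup :=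
  @TGroup (G * H)%type
    (fun p q => (@tg_mul G p.1 q.1, @tg_mul H p.2 q.2))
    (fun p => (@tg_inv G p.1, @tg_inv H p.2))
    (tg_one G, tg_one H).

Definition prod_act (G H : tgroup) (X Y : Type)
  (actX : G -> X -> X) (actY : H -> Y -> Y) :
  prod_tgroup G H -> (X * Y)%type -> (X * Y)%type :=
  fun gh xy => (actX gh.1 xy.1, actY gh.2 xy.2).

Definition split_group (G : tgroup) : Prop :=
  forall H : tgroup, pro_oligomorphic H ->
  forall (Z : Type) (actZ : prod_tgroup G H -> Z -> Z),
    transitive_Gset actZ ->
    exists (X : Type) (actX : G -> X -> X) (Y : Type) (actY : H -> Y -> Y),
      [/\ transitive_Gset actX, transitive_Gset actY &
          Gset_iso actZ (prod_act actX actY)].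

(* An open subgroup U of G as a topological group: carrier the subtype
   [set_type U] with the subspace (initial) topology, and restricted ops. *)
Section SubGroup.
Variables (G : tgroup) (U : set G) (hU : is_subgroup U).

Let mulU (x y : set_type U) : set_type U :=
  exist _ (@tg_mul G (set_val x) (set_val y))
    (mem_set (let: And3 _ hm _ := hU in
              hm _ _ (set_valP x) (set_valP y))).

Let invU (x : set_type U) : set_type U :=
  exist _ (@tg_inv G (set_val x))
    (mem_set (let: And3 _ _ hi := hU in hi _ (set_valP x))).

Let oneU : set_type U :=
  exist _ (tg_one G) (mem_set (let: And3 h1 _ _ := hU in h1)).

Definition sub_tgroup : tgroup := @TGroup (set_type U) mulU invU oneU.
End SubGroup.

(* Main.v *)
Require Import Defs.
From mathcomp Require Import all_boot all_order all_algebra.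
From mathcomp Require Import all_classical all_reals all_analysis.
Local Open Scope classical_set_scope.
Set Implicit Arguments. Unset Strict Implicit. Unset Printing Implicit Defensive.

Definition grp_ax (K : tgroup) : Prop :=
  [/\ (forall x y z : K, tg_mul x (tg_mul y z) = tg_mul (tg_mul x y) z),
      (forall x : K, tg_mul (tg_one K) x = x) &
      (forall x : K, tg_mul (tg_inv x) x = tg_one K)].

Lemma topgroup_grp (K : tgroup) : is_topgroup K -> grp_ax K.
Proof. by case. Qed.

Section Grp.
Variable K : tgroup.
Hypothesis hK : grp_ax K.
Local Notation mul := (@tg_mul K).
Local Notation inv := (@tg_inv K).
Local Notation one := (tg_one K).

Lemma gA (x y z : K) : mul x (mul y z) = mul (mul x y) z. Proof. by case: hK. Qed.
Lemma g1l (x : K) : mul one x = x. Proof. by case: hK. Qed.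
Lemma gVl (x : K) : mul (inv x) x = one. Proof. by case: hK. Qed.
Lemma gKl (x y : K) : mul (inv x) (mul x y) = y.
Proof. by rewrite gA gVl g1l. Qed.
Lemma gVr (x : K) : mul x (inv x) = one.
Proof.
have := gKl (inv x) (mul x (inv x)).
by rewrite (gKl x (inv x)) gVl => <-.
Qed.
Lemma g1r (x : K) : mul x one = x.
Proof. by rewrite -(gVl x) gA gVr g1l. Qed.
Lemma gKVl (x y : K) : mul x (mul (inv x) y) = y.
Proof. by rewrite gA gVr g1l. Qed.
Lemma gKr (x y : K) : mul (mul x y) (inv y) = x.
Proof. by rewrite -gA gVr g1r. Qed.
Lemma gKVr (x y : K) : mul (mul x (inv y)) y = x.
Proof. by rewrite -gA gVl g1r. Qed.
Lemma inv_uniq (w z : K) : mul w z = one -> inv z = w.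
Proof. by move=> h; rewrite -(g1l (inv z)) -h gKr. Qed.
Lemma gVK (x : K) : inv (inv x) = x.
Proof. by apply: inv_uniq; rewrite gVr. Qed.
Lemma gVM (x y : K) : inv (mul x y) = mul (inv y) (inv x).
Proof. by apply: inv_uniq; rewrite -gA gKl gVl. Qed.
Lemma gV1 : inv one = one.
Proof. by apply: inv_uniq; rewrite g1l. Qed.
Lemma gIl (x y z : K) : mul x y = mul x z -> y = z.
Proof. by move/(congr1 (mul (inv x))); rewrite !gKl. Qed.
Lemma gIr (x y z : K) : mul y x = mul z x -> y = z.
Proof. by move/(congr1 (fun t => mul t (inv x))); rewrite !gKr. Qed.
End Grp.

Ltac grsimpl h := repeat progress rewrite ?(gVM h) ?(gVK h) ?(gV1 h) -?(gA h)
  ?(gKl h) ?(gKVl h) ?(gVl h) ?(gVr h) ?(g1l h) ?(g1r h).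

Section Sub.
Variable K : tgroup.
Hypothesis hK : grp_ax K.
Local Notation mul := (@tg_mul K).
Local Notation inv := (@tg_inv K).
Local Notation one := (tg_one K).

Lemma sg1 (U : set K) : is_subgroup U -> U one. Proof. by case. Qed.
Lemma sgM (U : set K) x y : is_subgroup U -> U x -> U y -> U (mul x y).
Proof. by case=> _ h _; apply: h. Qed.
Lemma sgV (U : set K) x : is_subgroup U -> U x -> U (inv x).
Proof. by case=> _ _ h; apply: h. Qed.
Lemma sgVE (U : set K) x : is_subgroup U -> U (inv x) = U x.
Proof.
move=> hU; apply/propext; split; last exact: sgV.
by move/(sgV hU); rewrite gVK.
Qed.

Lemma normP (U : set K) g : normalizer U g <->
  (forall x, U (mul (mul g x) (inv g)) <-> U x).
Proof.
split.
  move=> hN x; split.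
    rewrite -{1}hN => -[u Uu /(gIr hK) /(gIl hK) <-] //.
  by move=> Ux; rewrite -hN; exists x.
move=> h; apply/seteqP; split => [_ [u Uu <-]|x Ux]; first by apply/h.
exists (mul (mul (inv g) x) g); last by grsimpl hK.
by apply/h; grsimpl hK.
Qed.

Lemma norm_sub (U : set K) : is_subgroup U -> U `<=` normalizer U.
Proof.
move=> hU g Ug; apply/normP => x; split => h.
  have := sgM hU (sgM hU (sgV hU Ug) h) Ug; by grsimpl hK.
by apply: sgM hU (sgM hU Ug h) (sgV hU Ug).
Qed.

Lemma norm_subgroup (U : set K) : is_subgroup (normalizer U).
Proof.
split.
- by apply/normP => x; rewrite gV1 // g1l // g1r.
- move=> a b /normP ha /normP hb; apply/normP => x.
  have -> : mul (mul (mul a b) x) (inv (mul a b)) =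
    mul (mul a (mul (mul b x) (inv b))) (inv a) by grsimpl hK.
  by rewrite (propext (ha _)) (propext (hb _)).
- move=> a /normP ha; apply/normP => x.
  rewrite -(propext (ha _)); grsimpl hK; done.
Qed.

Hypothesis hconj : forall a b : K, continuous (fun x => mul (mul a x) b).

Lemma nbhs_trans (a : K) (N : set K) : nbhs one N ->
  nbhs a [set x | N (mul (inv a) x)].
Proof.
move=> hN.
have h := @hconj (inv a) one a.
have e : mul (mul (inv a) a) one = one by rewrite gVl // g1r.
move: h; rewrite /continuous_at /= e => h.
have sub : (fun x => mul (mul (inv a) x) one) @^-1` N `<=` [set x | N (mul (inv a) x)].
  by move=> x /=; rewrite g1r.
exact: filterS sub (h _ hN).
Qed.

Lemma nbhs_conj (a : K) (N : set K) : nbhs one N ->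
  nbhs one [set x | N (mul (mul (inv a) x) a)].
Proof.
move=> hN.
have h := @hconj (inv a) a one.
have e : mul (mul (inv a) one) a = one by rewrite g1r // gVl.
move: h; rewrite /continuous_at /= e => h; exact: h _ hN.
Qed.

Lemma open_sg (S : set K) : is_subgroup S -> nbhs one S -> open S.
Proof.
move=> hS hN; rewrite openE => p Sp.
have sub : [set x | S (mul (inv p) x)] `<=` S.
  by move=> x /= h; have := sgM hS Sp h; rewrite gKVl.
exact: filterS sub (nbhs_trans p hN).
Qed.

Lemma open_nbhs1 (S : set K) : open S -> S one -> nbhs one S.
Proof. by move=> oS S1; apply: open_nbhs_nbhs. Qed.
End Sub.

Lemma mul_nbhs (K : tgroup) : is_topgroup K -> forall (a b : K) (A : set K),
  nbhs (tg_mul a b) A ->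
  exists2 P, nbhs a P & exists2 Q, nbhs b Q & forall p q, P p -> Q q -> A (tg_mul p q).
Proof.
case=> _ _ _ hc _ a b A hA; have := hc (a, b) _ hA.
move=> [[P Q] /= [hP hQ] hPQ].
by exists P => //; exists Q => // p q Pp Qq; exact: (hPQ (p, q)).
Qed.

Lemma topgroup_conj (K : tgroup) : is_topgroup K ->
  forall a b : K, continuous (fun x => tg_mul (tg_mul a x) b).
Proof.
move=> hK a b x A hA.
have [P nP [Q nQ hPQ]] := mul_nbhs hK hA.
have [P' nP' [Q' nQ' hPQ']] := mul_nbhs hK nP.
have sub : Q' `<=` (fun x => tg_mul (tg_mul a x) b) @^-1` A.
  move=> y Qy /=; apply: hPQ; last exact: nbhs_singleton nQ.
  by apply: hPQ' => //; exact: nbhs_singleton nP'.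
exact: filterS sub nQ'.
Qed.

Lemma prod_cont (G H : topologicalType) (f1 : G -> G) (f2 : H -> H) :
  continuous f1 -> continuous f2 ->
  continuous (fun p : G * H => (f1 p.1, f2 p.2)).
Proof.
move=> c1 c2 [x y] A [[P Q] /= [nP nQ] sPQ].
exists (f1 @^-1` P, f2 @^-1` Q); first by split; [exact: c1 _ _ nP|exact: c2 _ _ nQ].
by move=> [u v] [/= Pu Qv]; apply: sPQ.
Qed.

Lemma pairl_cont (G H : topologicalType) (c : H) :
  continuous (fun g : G => (g, c)).
Proof.
move=> x A [[P Q] /= [nP nQ] sPQ].
have sub : P `<=` (fun g : G => (g, c)) @^-1` A.
  by move=> g Pg; apply: sPQ; split => //=; exact: nbhs_singleton nQ.
exact: filterS sub nP.
Qed.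

Lemma pairr_cont (G H : topologicalType) (c : G) :
  continuous (fun h : H => (c, h)).
Proof.
move=> x A [[P Q] /= [nP nQ] sPQ].
have sub : Q `<=` (fun h : H => (c, h)) @^-1` A.
  by move=> g Pg; apply: sPQ; split => //=; exact: nbhs_singleton nP.
exact: filterS sub nQ.
Qed.

Lemma prod_conj (G H : tgroup) :
  (forall a b : G, continuous (fun x => tg_mul (tg_mul a x) b)) ->
  (forall a b : H, continuous (fun x => tg_mul (tg_mul a x) b)) ->
  forall a b : prod_tgroup G H, continuous (fun x => tg_mul (tg_mul a x) b).
Proof.
move=> cG cH a b.
exact: (prod_cont (cG a.1 b.1) (cH a.2 b.2)).
Qed.

Lemma prod_grp (G H : tgroup) : grp_ax G -> grp_ax H -> grp_ax (prod_tgroup G H).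
Proof.
move=> hG hH; split.
- by move=> [x1 x2] [y1 y2] [z1 z2] /=; rewrite !gA.
- by move=> [x1 x2] /=; rewrite !g1l.
- by move=> [x1 x2] /=; rewrite !gVl.
Qed.

Lemma open_pre (T S : topologicalType) (f : T -> S) (A : set S) :
  continuous f -> open A -> open (f @^-1` A).
Proof. by move=> cf oA; move/continuousP: cf; apply. Qed.

Section Act.
Variables (K : tgroup) (hK : grp_ax K) (X : Type) (act : K -> X -> X).
Local Notation mul := (@tg_mul K).
Local Notation inv := (@tg_inv K).
Local Notation one := (tg_one K).
Hypotheses (act1 : forall x, act one x = x)
  (actM : forall g h x, act (mul g h) x = act g (act h x)).

Lemma actKV g x : act (inv g) (act g x) = x.
Proof. by rewrite -actM gVl // act1. Qed.
Lemma actVK g x : act g (act (inv g) x) = x.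
Proof. by rewrite -actM gVr // act1. Qed.
Lemma act_inj g x y : act g x = act g y -> x = y.
Proof. by move/(congr1 (act (inv g))); rewrite !actKV. Qed.

Lemma stab_sg x : is_subgroup (stabilizer act x).
Proof.
rewrite /stabilizer; split => /=; first exact: act1.
- by move=> g h hg hh; rewrite actM hh hg.
- by move=> g hg; rewrite -{1}hg actKV.
Qed.

Lemma orbit_fin (x0 : X) : (forall x y, exists g, act g x = y) ->
  finite_set (range (Defs.orbit act)).
Proof.
move=> htr; apply: (sub_finite_set _ (finite_set1 (Defs.orbit act x0))).
move=> _ [x _ <-]; rewrite /=.
have [h hh] := htr x0 x.
apply/seteqP; split => y [g _ <-].
  by exists (mul g h) => //; rewrite actM hh.
by exists (mul g (inv h)) => //; rewrite actM -hh actKV.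
Qed.
End Act.

Lemma Gset_grp (K : tgroup) (X : Type) (act : K -> X -> X) : is_Gset act ->
  (forall x, act (tg_one K) x = x) /\
  (forall g h x, act (tg_mul g h) x = act g (act h x)).
Proof. by case. Qed.

Section Orb.
Variables (K L : tgroup) (hK : grp_ax K) (Z : Type) (actZ : L -> Z -> Z).
Hypothesis hZ : is_Gset actZ.
Variables (z0 : Z) (iota : K -> L).
Hypotheses (iota1 : iota (tg_one K) = tg_one L)
  (iotaM : forall a b, iota (tg_mul a b) = tg_mul (iota a) (iota b))
  (iotac : continuous iota).

Definition Orb := {x : Z | exists g, x = actZ (iota g) z0}.

Let act1Z : forall x, actZ (tg_one L) x = x. Proof. by case: hZ. Qed.
Let actMZ : forall g h x, actZ (tg_mul g h) x = actZ g (actZ h x).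
Proof. by case: hZ. Qed.

Lemma orbP g (x : Orb) : exists g', actZ (iota g) (sval x) = actZ (iota g') z0.
Proof. by case: x => x /= [g' e]; exists (tg_mul g g'); rewrite e iotaM actMZ. Qed.

Definition actO g (x : Orb) : Orb := exist _ (actZ (iota g) (sval x)) (orbP g x).

Lemma orb_eq (x y : Orb) : sval x = sval y -> x = y.
Proof. by case: x y => [x px] [y py] /= e; subst y; rewrite (Prop_irrelevance px py). Qed.

Definition orb_mk g : Orb := exist _ (actZ (iota g) z0) (ex_intro _ g erefl).

Lemma orb_trans : transitive_Gset actO.
Proof.
have a1 : forall x, actO (tg_one K) x = x.
  by move=> x; apply: orb_eq; rewrite /= iota1 act1Z.
have aM : forall g h x, actO (tg_mul g h) x = actO g (actO h x).
  by move=> g h x; apply: orb_eq; rewrite /= iotaM actMZ.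
have tr : forall x y, exists g, actO g x = y.
  move=> [x [g ex]] [y [h ey]]; exists (tg_mul h (tg_inv g)); apply: orb_eq => /=.
  by rewrite ex ey -actMZ -iotaM -(gA hK) (gVl hK) (g1r hK).
split => //; last by exists (orb_mk (tg_one K)).
split => //.
- move=> x.
  have -> : stabilizer actO x = iota @^-1` (stabilizer actZ (sval x)).
    apply/seteqP; split => g /=.
      by move/(congr1 sval).
    by move=> h; apply: orb_eq.
  apply: open_pre => //; by case: hZ.
- exact: (orbit_fin hK a1 aM (orb_mk (tg_one K)) tr).
Qed.
End Orb.

Section Cos.
Variables (K : tgroup) (hK : grp_ax K).
Local Notation mul := (@tg_mul K).
Local Notation inv := (@tg_inv K).
Local Notation one := (tg_one K).
Hypothesis hconj : forall a b : K, continuous (fun x => mul (mul a x) b).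
Variables (W : set K) (hW : open_subgroup W).

Let hWs : is_subgroup W. Proof. by case: hW. Qed.

Lemma lcosetM g p : lcoset g (lcoset p W) = lcoset (mul g p) W.
Proof.
apply/seteqP; split => x.
  by case=> _ [w Ww <-] <-; exists w => //; rewrite (gA hK).
by case=> w Ww <-; exists (mul p w); [exists w|rewrite (gA hK)].
Qed.

Lemma lcoset1 : lcoset one W = W.
Proof.
apply/seteqP; split => x; first by case=> w Ww <-; rewrite (g1l hK).
by move=> Wx; exists x => //; rewrite (g1l hK).
Qed.

Lemma lcoset_eq p q : lcoset p W = lcoset q W <-> W (mul (inv p) q).
Proof.
split.
  move=> e; have : lcoset q W q.
    by exists one; [exact: (sg1 hWs) | rewrite (g1r hK)].
 
  by rewrite -e => -[w Ww <-]; rewrite (gKl hK).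
move=> h; apply/seteqP; split => x [w Ww <-].
  exists (mul (mul (inv q) p) w); last by grsimpl hK.
  apply: sgM hWs _ Ww; have := sgV hWs h; by grsimpl hK.
exists (mul (mul (inv p) q) w); last by grsimpl hK.
exact: sgM hWs h Ww.
Qed.

Definition Cos := {S : set K | exists p, S = lcoset p W}.

Lemma cosP g (S : Cos) : exists p, lcoset g (sval S) = lcoset p W.
Proof. by case: S => S /= [p ->]; exists (mul g p); rewrite lcosetM. Qed.

Definition actC g (S : Cos) : Cos := exist _ (lcoset g (sval S)) (cosP g S).

Lemma cos_eq (x y : Cos) : sval x = sval y -> x = y.
Proof. by case: x y => [x px] [y py] /= e; subst y; rewrite (Prop_irrelevance px py). Qed.

Definition cmk p : Cos := exist _ (lcoset p W) (ex_intro _ p erefl).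
Definition c0 : Cos := cmk one.

Lemma actC_mk g p : actC g (cmk p) = cmk (mul g p).
Proof. by apply: cos_eq; rewrite /= lcosetM. Qed.

Lemma stab_mk p : stabilizer actC (cmk p) = [set g | W (mul (mul (inv p) g) p)].
Proof.
apply/seteqP; split => g /=.
  rewrite /stabilizer /= actC_mk => /(congr1 sval) /= /lcoset_eq.
  by move/(sgV hWs); grsimpl hK.
move=> h; rewrite /stabilizer /= actC_mk; apply: cos_eq => /=; apply/lcoset_eq.
by have := sgV hWs h; grsimpl hK.
Qed.

Lemma stab_c0 : stabilizer actC c0 = W.
Proof.
rewrite /c0 stab_mk; apply/seteqP; split => g /=; by rewrite (gV1 hK) // (g1l hK) // (g1r hK).
Qed.

Lemma cos_trans : transitive_Gset actC.
Proof.
have a1 : forall x, actC one x = x.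
  by move=> x; apply: cos_eq; case: x => S /= [p ->]; rewrite lcosetM (g1l hK).
have aM : forall g h x, actC (mul g h) x = actC g (actC h x).
  by move=> g h x; apply: cos_eq; case: x => S /= [p ->]; rewrite !lcosetM (gA hK).
have tr : forall x y, exists g, actC g x = y.
  move=> [x [g ex]] [y [h ey]]; exists (mul h (inv g)); apply: cos_eq => /=.
  by rewrite ex ey lcosetM -(gA hK) // (gVl hK) // (g1r hK).
split => //; last by exists c0.
split => //.
- move=> [S [p e]].
  have -> : exist _ S (ex_intro _ p e) = cmk p by apply: cos_eq.
  rewrite stab_mk.
  apply: (open_pre (f := fun g => mul (mul (inv p) g) p)) => //; by case: hW.
- exact: (orbit_fin hK a1 aM c0 tr).
Qed.
End Cos.

Definition cond_b (G H : tgroup) := forall W : set (prod_tgroup G H), open_subgroup W ->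
  exists (U : set G) (V : set H), [/\ open_subgroup U, open_subgroup V & W = U `*` V].

Definition cond_c (G : tgroup) := forall U : set G, open_subgroup U -> normalizer U = U.

Lemma c_to_b (G H : tgroup) : grp_ax G -> grp_ax H -> cond_c G -> cond_b G H.
Proof.
move=> hG hH hc W [hWs oW].
pose U := [set g : G | W ((g, tg_one H) : prod_tgroup G H)].
pose V := [set h : H | W ((tg_one G, h) : prod_tgroup G H)].
have hU : is_subgroup U.
  split; first exact: (sg1 hWs).
  - by move=> a b ha hb; have := sgM hWs ha hb; rewrite /= (g1l hH).
  - by move=> a ha; have := sgV hWs ha; rewrite /= (gV1 hH).
have hV : is_subgroup V.
  split; first exact: (sg1 hWs).
  - by move=> a b ha hb; have := sgM hWs ha hb; rewrite /= (g1l hG).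
  - by move=> a ha; have := sgV hWs ha; rewrite /= (gV1 hG).
have oU : open U by apply: (open_pre (@pairl_cont G H (tg_one H))).
have oV : open V by apply: (open_pre (@pairr_cont G H (tg_one G))).
have conjU : forall a b u, W ((a, b) : prod_tgroup G H) -> U u ->
    U (tg_mul (tg_mul a u) (tg_inv a)).
  move=> a b u hab hu; have := sgM hWs (sgM hWs hab hu) (sgV hWs hab).
  by rewrite /= (g1r hH) (gVr hH).
have UW : forall a b, W ((a, b) : prod_tgroup G H) -> U a.
  move=> a b hab; have hn : normalizer U a.
    apply/(normP hG) => x; split; last exact: conjU hab.
    have hab' := sgV hWs hab.
    move=> h; have := conjU _ _ _ hab' h; by grsimpl hG.
  by rewrite (hc U (conj hU oU)) in hn.
exists U, V; split => //.
apply/seteqP; split => [[a b] hab | [a b] [ha hb]] /=.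
  split; first exact: UW hab.
  have := sgM hWs (sgV hWs (UW _ _ hab)) hab.
  by rewrite /= (gVl hG) (gV1 hH) (g1l hH).
by have := sgM hWs ha hb; rewrite /= (g1r hG) (g1l hH).
Qed.

Lemma b_to_a (G H : tgroup) : grp_ax G -> grp_ax H -> cond_b G H ->
  forall (Z : Type) (actZ : prod_tgroup G H -> Z -> Z),
    transitive_Gset actZ ->
    exists (X : Type) (actX : G -> X -> X) (Y : Type) (actY : H -> Y -> Y),
      [/\ transitive_Gset actX, transitive_Gset actY &
          Gset_iso actZ (prod_act actX actY)].
Proof.
move=> hG hH hb Z actZ [hZ [z0 _] trZ].
have hGH := prod_grp hG hH.
have [a1 aM] := Gset_grp hZ.
pose W := stabilizer actZ z0.
have hWs : is_subgroup W := stab_sg hGH a1 aM z0.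
have oW : open W by case: hZ => _ _ h _; exact: h.
have [U [V [[hU _] [hV _] eW]]] := hb W (conj hWs oW).
pose iX := fun g : G => ((g, tg_one H) : prod_tgroup G H).
pose iY := fun h : H => ((tg_one G, h) : prod_tgroup G H).
have iX1 : iX (tg_one G) = tg_one (prod_tgroup G H) by [].
have iY1 : iY (tg_one H) = tg_one (prod_tgroup G H) by [].
have iXM : forall a b, iX (tg_mul a b) = tg_mul (iX a) (iX b).
  by move=> a b; rewrite /iX /= (g1l hH).
have iYM : forall a b, iY (tg_mul a b) = tg_mul (iY a) (iY b).
  by move=> a b; rewrite /iY /= (g1l hG).
have iXc : continuous iX by apply: (@pairl_cont G H (tg_one H)).
have iYc : continuous iY by apply: (@pairr_cont G H (tg_one G)).
have splitL : forall a b, actZ ((a, b) : prod_tgroup G H) z0 = actZ (iX a) (actZ (iY b) z0).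
  by move=> a b; rewrite -aM /iX /iY /= (g1r hG) (g1l hH).
have splitR : forall a b, actZ ((a, b) : prod_tgroup G H) z0 = actZ (iY b) (actZ (iX a) z0).
  by move=> a b; rewrite -aM /iX /iY /= (g1l hG) (g1r hH).
have wd : forall p q : prod_tgroup G H, actZ p z0 = actZ q z0 ->
    actZ (iX p.1) z0 = actZ (iX q.1) z0 /\ actZ (iY p.2) z0 = actZ (iY q.2) z0.
  move=> p q e.
  have hw : W (tg_mul (tg_inv p) q) by change (actZ (tg_mul (tg_inv p) q) z0 = z0); rewrite aM -e (actKV hGH a1 aM).
  rewrite eW in hw; case: hw => /= hu hv.
  have wX : W (iX (tg_mul (tg_inv p.1) q.1)).
    by rewrite eW; split => //=; exact: (sg1 hV).
  have wY : W (iY (tg_mul (tg_inv p.2) q.2)).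
    by rewrite eW; split => //=; exact: (sg1 hU).
  split.
    by rewrite -{1}wX -aM -iXM (gKVl hG).
  by rewrite -{1}wY -aM -iYM (gKVl hH).
pose X := Orb actZ z0 iX.
pose Y := Orb actZ z0 iY.
pose actX := @actO G _ _ _ hZ z0 _ iXM.
pose actY := @actO H _ _ _ hZ z0 _ iYM.
exists X, actX, Y, actY; split.
- exact: (orb_trans hG hZ z0 iX1 iXM iXc).
- exact: (orb_trans hH hZ z0 iY1 iYM iYc).
pose pick z := sval (cid (trZ z0 z)).
have pickP : forall z, actZ (pick z) z0 = z by move=> z; rewrite /pick; case: cid.
pose f z := (orb_mk actZ z0 iX (pick z).1, orb_mk actZ z0 iY (pick z).2).
pose gx (x : X) := sval (cid (svalP x)).
pose gy (y : Y) := sval (cid (svalP y)).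
have gxP : forall x : X, sval x = actZ (iX (gx x)) z0 by move=> x; rewrite /gx; case: cid.
have gyP : forall y : Y, sval y = actZ (iY (gy y)) z0 by move=> y; rewrite /gy; case: cid.
pose g (xy : X * Y) := actZ ((gx xy.1, gy xy.2) : prod_tgroup G H) z0.
exists f; split.
  exists g.
    move=> z; rewrite /g /f /=.
    have ex := gxP (orb_mk actZ z0 iX (pick z).1).
    have ey := gyP (orb_mk actZ z0 iY (pick z).2).
    rewrite /= in ex ey.
    rewrite splitR -ex -aM.
    have -> : tg_mul (iY (gy (orb_mk actZ z0 iY (pick z).2))) (iX (pick z).1) =
              tg_mul (iX (pick z).1) (iY (gy (orb_mk actZ z0 iY (pick z).2))).
      by rewrite /iX /iY /= (g1l hG) (g1r hH) (g1r hG) (g1l hH).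
    rewrite aM -ey -splitL -{3}(pickP z).
    by case: (pick z).
  move=> [x y]; rewrite /f /g /=.
  have e := pickP (actZ ((gx x, gy y) : prod_tgroup G H) z0).
  have [e1 e2] := wd _ _ e.
  congr pair; apply: orb_eq => /=.
    by rewrite e1 /= -gxP.
  by rewrite e2 /= -gyP.
move=> p z; rewrite /f /prod_act /=.
have e : actZ (pick (actZ p z)) z0 = actZ (tg_mul p (pick z)) z0.
  by rewrite pickP aM pickP.
have [e1 e2] := wd _ _ e.
congr pair; apply: orb_eq => /=.
  by rewrite e1 /= iXM aM.
by rewrite e2 /= iYM aM.
Qed.

Lemma stab_iso (K : tgroup) (X Y : Type) (actX : K -> X -> X) (actY : K -> Y -> Y)
  (f : X -> Y) : bijective f -> equivariant actX actY f ->
  forall x, stabilizer actX x = stabilizer actY (f x).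
Proof.
move=> bf ef x; apply/seteqP; split => g; rewrite /stabilizer /= => h.
  by rewrite -ef h.
by apply: (bij_inj bf); rewrite ef.
Qed.

Lemma stab_prod (G H : tgroup) (X Y : Type) (actX : G -> X -> X) (actY : H -> Y -> Y)
  x y : stabilizer (prod_act actX actY) (x, y) = stabilizer actX x `*` stabilizer actY y.
Proof.
apply/seteqP; split => -[a b] /=; rewrite /stabilizer /prod_act /=.
  by case=> -> ->.
by case=> /= -> ->.
Qed.

Lemma a_to_b (G H : tgroup) : is_topgroup G -> is_topgroup H -> split_group G ->
  pro_oligomorphic H -> cond_b G H.
Proof.
move=> tG tH hs hP W hW.
have hGH := prod_grp (topgroup_grp tG) (topgroup_grp tH).
have hconj := prod_conj (topgroup_conj tG) (topgroup_conj tH).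
have trZ := cos_trans hGH hconj hW.
have [X [actX [Y [actY [trX trY [f [bf ef]]]]]]] := hs H hP _ _ trZ.
have [hX _ _] := trX; have [hY _ _] := trY.
have [a1X aMX] := Gset_grp hX; have [a1Y aMY] := Gset_grp hY.
exists (stabilizer actX (f (c0 W)).1), (stabilizer actY (f (c0 W)).2); split.
- split; first exact: (stab_sg (topgroup_grp tG) a1X aMX).
  by case: hX.
- split; first exact: (stab_sg (topgroup_grp tH) a1Y aMY).
  by case: hY.
rewrite -stab_prod -surjective_pairing -(stab_iso bf ef).
by rewrite stab_c0.
Qed.

Lemma b_to_c (G : tgroup) : is_topgroup G -> cond_b G G -> cond_c G.
Proof.
move=> tG hb U [hUs oU].
have hG := topgroup_grp tG; have hconj := topgroup_conj tG.
apply/seteqP; split; last first. exact: (@norm_sub G hG U hUs).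
move=> g hg.
pose N := normalizer U.
have hN : is_subgroup N := norm_subgroup hG U.
pose W := [set p : prod_tgroup G G |
  [/\ N p.1, N p.2 & U (tg_mul (tg_inv p.1) p.2)]].
have hWs : is_subgroup W.
  split.
  - split => /=; try exact: (sg1 hN).
    by rewrite (gVl hG); exact: (sg1 hUs).
  - move=> [a1 a2] [b1 b2] [na1 na2 ua] [nb1 nb2 ub] /=.
    split; try exact: sgM hN _ _.
    have e : tg_mul (tg_mul (tg_mul (tg_inv b1) (tg_mul (tg_inv a1) a2)) (tg_inv (tg_inv b1)))
        (tg_mul (tg_inv b1) b2) = tg_mul (tg_inv (tg_mul a1 b1)) (tg_mul a2 b2).
      by grsimpl hG.
    rewrite -e; apply: sgM hUs _ ub.
    by apply/(normP hG _ _).1 => //; exact: sgV hN nb1.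
  - move=> [a1 a2] [na1 na2 ua] /=.
    split; try exact: sgV hN _.
    have e : tg_mul (tg_mul a1 (tg_inv (tg_mul (tg_inv a1) a2))) (tg_inv a1) =
        tg_mul (tg_inv (tg_inv a1)) (tg_inv a2) by grsimpl hG.
    rewrite -e; apply/(normP hG _ _).1 => //.
    exact: sgV hUs ua.
have nU : nbhs (tg_one G) U := open_nbhs1 oU (sg1 hUs).
have oW : open W.
  rewrite openE => -[a b] [na nb uab].
  exists ([set x | U (tg_mul (tg_inv a) x)], [set y | U (tg_mul (tg_inv b) y)]).
    by split; [exact: (nbhs_trans hG hconj a nU) | exact: (nbhs_trans hG hconj b nU)].
  move=> [x y] [/= hx hy]; split => /=.
  - by have := sgM hN na (norm_sub hG hUs hx); rewrite (gKVl hG).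
  - by have := sgM hN nb (norm_sub hG hUs hy); rewrite (gKVl hG).
  have e : tg_mul (tg_mul (tg_inv (tg_mul (tg_inv a) x)) (tg_mul (tg_inv a) b))
      (tg_mul (tg_inv b) y) = tg_mul (tg_inv x) y by grsimpl hG.
  by rewrite -e; apply: sgM hUs (sgM hUs (sgV hUs hx) uab) hy.
have [A [B [_ _ eW]]] := hb W (conj hWs oW).
have Wgg : W ((g, g) : prod_tgroup G G).
  by split => //=; rewrite (gVl hG); exact: (sg1 hUs).
have W11 : W ((tg_one G, tg_one G) : prod_tgroup G G).
  by split => /=; [exact: (sg1 hN)|exact: (sg1 hN)|rewrite (gVl hG); exact: (sg1 hUs)].
rewrite eW in Wgg W11; case: Wgg => Ag _; case: W11 => _ B1.
have : W ((g, tg_one G) : prod_tgroup G G) by rewrite eW.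
by case=> _ _ /=; rewrite (g1r hG) (sgVE hG _ hUs).
Qed.

Definition cond_d (G : tgroup) := forall (X : Type) (act : G -> X -> X), transitive_Gset act ->
  forall f : X -> X, bijective f -> equivariant act act f -> forall x, f x = x.

Lemma c_to_d (G : tgroup) : grp_ax G -> cond_c G -> cond_d G.
Proof.
move=> hG hc X act [hX _ tr] f bf ef x.
have [a1 aM] := Gset_grp hX.
have [g hgx] := tr x (f x).
pose U := stabilizer act x.
have hUs : is_subgroup U := stab_sg hG a1 aM x.
have oU : open U by case: hX => _ _ h _; exact: h.
have key : forall y, act (tg_mul (tg_mul g y) (tg_inv g)) (act g x) = act g (act y x).
  by move=> y; rewrite -aM (gKVr hG) aM.
have hn : normalizer U g.
  apply/(normP hG) => y; split => hy.
    apply: (act_inj hG a1 aM (g := g)).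
    rewrite -key hgx -ef.
    by have -> : act (tg_mul (tg_mul g y) (tg_inv g)) x = x by exact: hy.
  apply: (bij_inj bf); rewrite /U /stabilizer /= ef -hgx key.
  by have -> : act y x = x by exact: hy.
rewrite (hc U (conj hUs oU)) in hn.
by rewrite -hgx; exact: hn.
Qed.

Section RImg.
Variables (G : tgroup) (hG : grp_ax G).
Definition rimg (S : set G) (g : G) : set G := (fun s => tg_mul s g) @` S.

Lemma rimgM S a b : rimg (rimg S a) b = rimg S (tg_mul a b).
Proof.
apply/seteqP; split => x.
  by case=> _ [s Ss <-] <-; exists s => //; rewrite (gA hG).
by case=> s Ss <-; exists (tg_mul s a); [exists s|rewrite (gA hG)].
Qed.

Lemma rimg1 S : rimg S (tg_one G) = S.
Proof.
apply/seteqP; split => x; first by case=> s Ss <-; rewrite (g1r hG).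
by move=> Sx; exists x => //; rewrite (g1r hG).
Qed.

Lemma rimg_lcoset a S g : rimg (lcoset a S) g = lcoset a (rimg S g).
Proof.
apply/seteqP; split => x.
  by case=> _ [s Ss <-] <-; exists (tg_mul s g); [exists s|rewrite (gA hG)].
by case=> _ [s Ss <-] <-; exists (tg_mul a s); [exists s|rewrite (gA hG)].
Qed.

Lemma rimg_lcosetN (U : set G) (hU : is_subgroup U) g p :
  normalizer U g -> rimg (lcoset p U) g = lcoset (tg_mul p g) U.
Proof.
move=> hg.
have hgi : normalizer U (tg_inv g) := sgV (norm_subgroup hG U) hg.
apply/seteqP; split => x.
  case=> _ [u Uu <-] <-.
  exists (tg_mul (tg_mul (tg_inv g) u) (tg_inv (tg_inv g))).
    by apply/(normP hG _ _).1.
  by grsimpl hG.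
case=> u Uu <-.
exists (tg_mul p (tg_mul (tg_mul g u) (tg_inv g))); last by grsimpl hG.
by exists (tg_mul (tg_mul g u) (tg_inv g)) => //; apply/(normP hG _ _).1.
Qed.
End RImg.

Lemma d_to_c (G : tgroup) : is_topgroup G -> cond_d G -> cond_c G.
Proof.
move=> tG hd U hU.
have hG := topgroup_grp tG; have hconj := topgroup_conj tG.
have hUs : is_subgroup U by case: hU.
apply/seteqP; split; last exact: (@norm_sub G hG U hUs).
move=> g hg.
have hgi : normalizer U (tg_inv g) := sgV (norm_subgroup hG U) hg.
have fP : forall h, normalizer U h -> forall S : Cos U,
    exists p, rimg (sval S) h = lcoset p U.
  move=> h hh [S [p e]] /=; exists (tg_mul p h); rewrite e.
  exact: rimg_lcosetN.
pose f (S : Cos U) : Cos U := exist _ (rimg (sval S) g) (fP g hg S).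
pose f' (S : Cos U) : Cos U := exist _ (rimg (sval S) (tg_inv g)) (fP _ hgi S).
have bf : bijective f.
  exists f' => S; apply: cos_eq => /=; by rewrite rimgM // ?gVr ?gVl // rimg1.
have ef : equivariant (actC hG (W := U)) (actC hG (W := U)) f.
  by move=> a S; apply: cos_eq => /=; rewrite rimg_lcoset.
have := hd _ _ (cos_trans hG hconj hU) f bf ef (c0 U).
move/(congr1 sval) => /=; rewrite lcoset1 // => e.
by rewrite -e; exists (tg_one G); [exact: (sg1 hUs)|rewrite (g1l hG)].
Qed.

Definition cond_e (G : tgroup) := forall U V : set G, open_subgroup U -> open_subgroup V ->
  V `<=` U -> finite_set [set lcoset u V | u in U] -> U = V.

Lemma e_to_c (G : tgroup) : pro_oligomorphic G -> cond_e G -> cond_c G.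
Proof.
move=> [tG _ _ hfin] he U [hUs oU].
have hG := topgroup_grp tG; have hconj := topgroup_conj tG.
pose N := normalizer U.
have hN : is_subgroup N := norm_subgroup hG U.
have sUN : U `<=` N := @norm_sub G hG U hUs.
have oN : open N.
  apply: (open_sg hG hconj hN).
  exact: filterS sUN (open_nbhs1 oU (sg1 hUs)).
apply: (he N U (conj hN oN) (conj hUs oU) sUN).
apply: (sub_finite_set _ (hfin U U (conj hUs oU) (conj hUs oU))).
move=> _ [u Nu <-]; exists u => //.
have Nui : N (tg_inv u) := sgV hN Nu.
apply/seteqP; split => x.
  case=> a [b [Ua Ub ->]].
  exists (tg_mul (tg_mul (tg_mul (tg_inv u) a) (tg_inv (tg_inv u))) b); last by grsimpl hG.
  by apply: sgM hUs _ Ub; apply/(normP hG _ _).1.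
case=> w Uw <-; exists (tg_one G), w; split => //; first exact: (sg1 hUs).
by rewrite (g1l hG).
Qed.

Lemma c_to_e (G : tgroup) : is_topgroup G -> cond_c G -> cond_e G.
Proof.
move=> tG hc U V [hUs oU] [hVs oV] VU fin.
have hG := topgroup_grp tG; have hconj := topgroup_conj tG.
pose C := [set x | U x /\ forall u, U u -> V (tg_mul (tg_mul (tg_inv u) x) u)].
have hCs : is_subgroup C.
  split.
  - split; first exact: (sg1 hUs).
    by move=> u _; rewrite (g1r hG) (gVl hG); exact: (sg1 hVs).
  - move=> x y [Ux hx] [Uy hy]; split; first exact: sgM hUs Ux Uy.
    move=> u Uu.
    have e : tg_mul (tg_mul (tg_mul (tg_inv u) x) u) (tg_mul (tg_mul (tg_inv u) y) u) =
      tg_mul (tg_mul (tg_inv u) (tg_mul x y)) u by grsimpl hG.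
    by rewrite -e; apply: sgM hVs (hx _ Uu) (hy _ Uu).
  - move=> x [Ux hx]; split; first exact: sgV hUs Ux.
    move=> u Uu.
    have e : tg_inv (tg_mul (tg_mul (tg_inv u) x) u) =
      tg_mul (tg_mul (tg_inv u) (tg_inv x)) u by grsimpl hG.
    by rewrite -e; apply: sgV hVs (hx _ Uu).
have nU : nbhs (tg_one G) U := open_nbhs1 oU (sg1 hUs).
have nV : nbhs (tg_one G) V := open_nbhs1 oV (sg1 hVs).
pose S := [set lcoset u V | u in U].
pose D (c : set G) := [set x | forall u, U u -> lcoset u V = c ->
  V (tg_mul (tg_mul (tg_inv u) x) u)].
have nD : forall c, S c -> nbhs (tg_one G) (D c).
  move=> _ [u0 Uu0 <-].
  have sub : [set x | V (tg_mul (tg_mul (tg_inv u0) x) u0)] `<=` D (lcoset u0 V).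
    move=> x /= hx u Uu /esym /(lcoset_eq hG (conj hVs oV)) hv.
    have e : tg_mul (tg_mul (tg_inv (tg_mul (tg_inv u0) u))
        (tg_mul (tg_mul (tg_inv u0) x) u0)) (tg_mul (tg_inv u0) u) =
        tg_mul (tg_mul (tg_inv u) x) u by grsimpl hG.
    by rewrite -e; apply: sgM hVs (sgM hVs (sgV hVs hv) hx) hv.
  exact: filterS sub (nbhs_conj hG hconj u0 nV).
have nbig : nbhs (tg_one G) (\bigcap_(c in S) D c).
  rewrite /S -(fset_setK fin); apply: filter_bigI => c.
  by rewrite in_fset_set // inE => Sc; exact: nD.
have nC : nbhs (tg_one G) C.
  have sub : U `&` \bigcap_(c in S) D c `<=` C.
    move=> x [Ux hx]; split => // u Uu.
    by apply: (hx (lcoset u V)) => //; exists u.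
  exact: filterS sub (filterI nU nbig).
have oC : open C := open_sg hG hconj hCs nC.
have UN : U `<=` normalizer C.
  move=> g Ug; apply/(normP hG) => x; split.
    move=> [hU' hV']; split.
      by have := sgM hUs (sgM hUs (sgV hUs Ug) hU') Ug; grsimpl hG.
    move=> u Uu.
    have e : tg_mul (tg_mul (tg_inv (tg_mul g u)) (tg_mul (tg_mul g x) (tg_inv g)))
        (tg_mul g u) = tg_mul (tg_mul (tg_inv u) x) u by grsimpl hG.
    by rewrite -e; apply: hV'; exact: sgM hUs Ug Uu.
  move=> [Ux hx]; split; first exact: sgM hUs (sgM hUs Ug Ux) (sgV hUs Ug).
  move=> u Uu.
  have e : tg_mul (tg_mul (tg_inv (tg_mul (tg_inv g) u)) x) (tg_mul (tg_inv g) u) =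
      tg_mul (tg_mul (tg_inv u) (tg_mul (tg_mul g x) (tg_inv g))) u by grsimpl hG.
  by rewrite -e; apply: hx; exact: sgM hUs (sgV hUs Ug) Uu.
rewrite (hc C (conj hCs oC)) in UN.
apply/seteqP; split => // x /UN [_ h].
by have := h _ (sg1 hUs); rewrite (gV1 hG) (g1l hG) (g1r hG).
Qed.

Section SubG.
Variables (G : tgroup) (hG : grp_ax G) (U : set G) (hUs : is_subgroup U).
Local Notation S := (sub_tgroup hUs).

Lemma sub_valM (x y : S) : set_val (tg_mul x y) = tg_mul (set_val x) (set_val y).
Proof. by []. Qed.
Lemma sub_valV (x : S) : set_val (tg_inv x) = tg_inv (set_val x).
Proof. by []. Qed.
Lemma sub_val1 : set_val (tg_one S) = tg_one G.
Proof. by []. Qed.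

Lemma sub_grp : grp_ax S.
Proof.
split.
- by move=> x y z; apply: val_inj; rewrite /= (gA hG).
- by move=> x; apply: val_inj; rewrite /= (g1l hG).
- by move=> x; apply: val_inj; rewrite /= (gVl hG).
Qed.

Lemma sub_c : open U -> cond_c G -> cond_c S.
Proof.
move=> oU hc T [hTs oT].
have hS := sub_grp.
apply/seteqP; split; last exact: (@norm_sub S hS T hTs).
move=> g hg.
case: oT => O oO eO.
have TO : forall s : S, T s <-> O (set_val s).
  by move=> s; rewrite -eO.
pose mk x (Ux : U x) : S := exist _ x (mem_set Ux).
pose T' := [set x : G | U x /\ O x].
have hT's : is_subgroup T'.
  split.
  - by split; [exact: (sg1 hUs)|exact/(TO (tg_one S))/(sg1 hTs)].
  - move=> x y [Ux Ox] [Uy Oy]; split; first exact: sgM hUs Ux Uy.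
    have := sgM hTs ((TO (mk _ Ux)).2 Ox) ((TO (mk _ Uy)).2 Oy).
    by move/TO.
  - move=> x [Ux Ox]; split; first exact: sgV hUs Ux.
    have := sgV hTs ((TO (mk _ Ux)).2 Ox).
    by move/TO.
have oT' : open T' by apply: openI.
have Ug : U (set_val g) := set_valP g.
have hn : normalizer T' (set_val g).
  apply/(normP hG) => x; split.
    move=> [Ux' Ox'].
    have Ux : U x.
      have := sgM hUs (sgM hUs (sgV hUs Ug) Ux') Ug; by grsimpl hG.
    split => //; apply/(TO (mk _ Ux)).
    apply/((normP hS T g).1 hg (mk _ Ux)); apply/TO => //.
  move=> [Ux Ox]; split; first exact: sgM hUs (sgM hUs Ug Ux) (sgV hUs Ug).
  have := ((normP hS T g).1 hg (mk _ Ux)).2 ((TO (mk _ Ux)).2 Ox).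
  by move/TO.
rewrite (hc T' (conj hT's oT')) in hn.
by apply/TO; case: hn.
Qed.
End SubG.

Unset Implicit Arguments.

Theorem proposition5p5 (G : tgroup) :
  pro_oligomorphic G ->
  [/\ split_group G <->
        (forall H : tgroup, pro_oligomorphic H ->
         forall W : set (prod_tgroup G H), open_subgroup W ->
         exists (U : set G) (V : set H),
           [/\ open_subgroup U, open_subgroup V & W = U `*` V]),
      split_group G <->
        (forall U : set G, open_subgroup U -> normalizer U = U),
      split_group G <->
        (forall (X : Type) (act : G -> X -> X), transitive_Gset act ->
         forall f : X -> X, bijective f -> equivariant act act f ->
         forall x, f x = x) &
      split_group G <->
        (forall U V : set G, open_subgroup U -> open_subgroup V -> V `<=` U ->
         finite_set [set lcoset u V | u in U] -> U = V)]
  /\ (split_group G ->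
      forall (U : set G) (hU : open_subgroup U),
        split_group (sub_tgroup hU.1)).
Proof.
move=> hP; have [tG _ _ _] := hP.
have hG := topgroup_grp tG.
have a_c : split_group G -> cond_c G.
  by move=> ha; exact: (b_to_c tG (a_to_b tG tG ha hP)).
have c_a : cond_c G -> split_group G.
  move=> hc H hPH; have [tH _ _ _] := hPH.
  exact: (b_to_a hG (topgroup_grp tH) (c_to_b hG (topgroup_grp tH) hc)).
split; first split.
- split.
    move=> ha H hPH; have [tH _ _ _] := hPH.
    exact: (a_to_b tG tH ha hPH).
  move=> hb H hPH; have [tH _ _ _] := hPH.
  exact: (b_to_a hG (topgroup_grp tH) (hb H hPH)).
- by split; [exact: a_c|exact: c_a].
- split; first by move=> ha; exact: (c_to_d hG (a_c ha)).
  by move=> hd; apply: c_a; exact: (d_to_c tG hd).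
- split; first by move=> ha; exact: (c_to_e tG (a_c ha)).
  by move=> he; apply: c_a; exact: (e_to_c hP he).
move=> ha U hU H hPH; have [tH _ _ _] := hPH.
have oU : open U by case: hU.
have hS := sub_grp hG hU.1.
have hcS := @sub_c G hG U hU.1 oU (a_c ha).
move=> Z actZ trZ.
exact: (@b_to_a (sub_tgroup hU.1) H hS (topgroup_grp tH)
  (@c_to_b (sub_tgroup hU.1) H hS (topgroup_grp tH) hcS) Z actZ trZ).
Qed.
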